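(* Let $G$ be a finite group. If the difference graph $\mathcal{D}(G)$ is null (has no edges), then the power graph $\mathcal{P}(G)$ is a cograph, i.e. it contains no induced subgraph isomorphic to the path $P_4$ on four vertices.
   Context: For a finite group $G$ with identity $e$: the intersection power graph $\mathcal{G}_I(G)$ has vertex set $G$, two distinct non-identity vertices $x,y$ being adjacent iff $\langle x\rangle\cap\langle y\rangle\neq\{e\}$, and $e$ being adjacent to every other vertex. The power graph $\mathcal{P}(G)$ has vertex set $G$, two distinct vertices being adjacent iff one is a power of the other. The difference graph $\mathcal{D}(G)$ has edge set $E(\mathcal{G}_I(G))\setminus E(\mathcal{P}(G))$ with isolated vertices removed. *)

(* Defs.v *)
From mathcomp Require Import all_boot all_fingroup.
Set Implicit Arguments. Unset Strict Implicit. Unset Printing Implicit Defensive.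
Local Open Scope group_scope.

(* A finite group G is represented as the whole carrier of a finGroupType gT. *)

Definition power_adj (gT : finGroupType) (x y : gT) : bool :=
  (x != y) && ((x \in <[y]>) || (y \in <[x]>)).

Definition inter_power_adj (gT : finGroupType) (x y : gT) : bool :=
  (x != y) && [|| x == 1, y == 1 | <[x]> :&: <[y]> != 1].

(* The difference graph D(G) has edge set E(G_I(G)) \ E(P(G)) (isolated
   vertices removed); it is null iff it has no edges. *)
Definition difference_graph_null (gT : finGroupType) : Prop :=
  forall x y : gT, inter_power_adj x y && ~~ power_adj x y = false.

Definition induced_P4 (T : Type) (e : T -> T -> bool) (a b c d : T) : bool :=
  [&& e a b, e b c, e c d, ~~ e a c, ~~ e b d & ~~ e a d].

(* A graph is a cograph iff it contains no induced P4 (vertices of an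
   induced P4 are automatically distinct for an irreflexive relation). *)
Definition P4_free (T : Type) (e : T -> T -> bool) : Prop :=
  forall a b c d : T, ~ induced_P4 e a b c d.

(* Main.v *)
Require Import Defs.
From mathcomp Require Import all_boot all_fingroup.
Set Implicit Arguments. Unset Strict Implicit. Unset Printing Implicit Defensive.
Local Open Scope group_scope.

Lemma power_adjC (gT : finGroupType) (x y : gT) : power_adj x y = power_adj y x.
Proof. by rewrite /power_adj eq_sym orbC. Qed.

Lemma ends_triv (gT : finGroupType) (x z : gT) :
  difference_graph_null gT -> ~~ power_adj x z -> x != z ->
  [/\ x != 1, z != 1 & <[x]> :&: <[z]> == 1].
Proof.
move=> H nxz xz; have := H x z; rewrite nxz andbT /inter_power_adj xz /=.
by case: (x == 1) => //; case: (z == 1) => //=; case: eqP.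
Qed.

Lemma middle (gT : finGroupType) (x y z : gT) :
  difference_graph_null gT -> y != 1 -> power_adj x y -> power_adj y z ->
  ~~ power_adj x z -> x != z -> (x \in <[y]>) && (z \in <[y]>).
Proof.
move=> H y1 /andP[_ xy] /andP[_ yz] nxz xz.
have [x1 z1 /eqP I] := ends_triv H nxz xz.
have nxz' := nxz; rewrite /power_adj xz /= negb_or in nxz'.
case/andP: nxz' => xnz znx.
case/orP: xy => xy; case/orP: yz => yz.
- exfalso; move: xnz; rewrite (subsetP _ _ xy) //.
  by rewrite cycle_subG.
- by rewrite xy yz.
- exfalso; have: y \in <[x]> :&: <[z]> by rewrite inE yz xy.
  by rewrite I inE (negPf y1).
- exfalso; move: znx; rewrite (subsetP _ _ yz) //.
  by rewrite cycle_subG.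
Qed.

Theorem proposition2p5 (gT : finGroupType) :
  difference_graph_null gT -> P4_free (@power_adj gT).
Proof.
move=> H a b c d /andP[ab /andP[bc /andP[cd /andP[nac /andP[nbd nad]]]]].
have ac : a != c.
  by apply/eqP=> e; move: nad; rewrite e cd.
have bd : b != d.
  by apply/eqP=> e; move: nad; rewrite -e ab.
have [_ c1 _] := ends_triv H nac ac.
have [b1 _ _] := ends_triv H nbd bd.
case/andP: (middle H b1 ab bc nac ac) => ab' _.
case/andP: (middle H c1 bc cd nbd bd) => bc' _.
move: nac; rewrite /power_adj ac /=.
by rewrite (subsetP _ _ ab') // cycle_subG.
Qed.
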